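(* Let $G=C_3^3$ with basis $(e_1,e_2,e_3)$, let $e_0=e_1+e_2+e_3$, and let $U=e_1^2e_2^2e_3^2e_0$ (a sequence of length $7$). Then for every $k\in\mathbb N$, \[ \mathsf L(U^{3k})=3k+2\cdot[0,2k]. \] In particular $\max\mathsf L(U^{3k})/\min\mathsf L(U^{3k})=7/3$ for every $k\in\mathbb N$.
   Context: $C_3^3$ denotes the elementary abelian $3$-group of rank $3$. $[a,b]=\{x\in\mathbb Z:a\le x\le b\}$, $y+L=\{y+a:a\in L\}$, $k\cdot L=\{ka:a\in L\}$. For a finite abelian group $G$, a sequence over $G$ is an element of the free abelian monoid $\mathcal F(G)$ with basis $G$ (a finite unordered list of elements of $G$, repetitions allowed; $e_1^2$ means $e_1$ occurring twice, and $U^{3k}$ is the $3k$-fold product of $U$). $\mathcal B(G)$ is the monoid of zero-sum sequences over $G$. An atom is a minimal zero-sum sequence, i.e. a nonempty zero-sum sequence that is not a product of two nonempty zero-sum sequences. For $B\in\mathcal B(G)$, $\mathsf L(B)=\{k\in\mathbb N_0: B \text{ is a product of } k \text{ atoms}\}$. *)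

(* Defs.v *)
From mathcomp Require Import all_boot all_order all_algebra.
Set Implicit Arguments. Unset Strict Implicit. Unset Printing Implicit Defensive.
Import GRing.Theory.
Local Open Scope ring_scope.

Definition G := 'rV['Z_3]_3.

(* Sequences over G: elements of the free abelian monoid F(G) are represented
   by lists, considered up to permutation (perm_eq); the monoid product is
   concatenation. *)
Definition zero_sum (S : seq G) : bool := \sum_(g <- S) g == 0.

Definition atom (S : seq G) : Prop :=
  [/\ S != [::], zero_sum S &
      ~ exists T1 T2 : seq G,
          [/\ T1 != [::], T2 != [::], zero_sum T1, zero_sum T2 &
              perm_eq S (T1 ++ T2)]].

Definition in_L (B : seq G) (k : nat) : Prop :=
  exists As : seq (seq G),
    [/\ size As = k, (forall A, A \in As -> atom A) & perm_eq (flatten As) B].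

(* Basis e_1, e_2, e_3 (indices 0,1,2) and e_0 = e_1 + e_2 + e_3. *)
Definition e (i : 'I_3) : G := delta_mx 0 i.
Definition e0 : G := e 0 + e 1 + e 2.

Definition U : seq G := [:: e 0; e 0; e 1; e 1; e 2; e 2; e0].

Definition Upow (n : nat) : seq G := flatten (nseq n U).

(* Main.v *)
Require Import Defs.
From mathcomp Require Import all_boot all_order all_algebra.
From mathcomp Require Import zify.
Import GRing.Theory.
Local Open Scope ring_scope.

Lemma natZ3 n : ((n%:R : 'Z_3) == 0) = (3 %| n)%N.
Proof. by rewrite Zp_nat /dvdn -val_eqE. Qed.

Lemma e_ent i j : e i 0 j = (j == i)%:R.
Proof. by rewrite /e mxE eqxx. Qed.

Lemma e0_ent j : e0 0 j = 1.
Proof. by rewrite /e0 !mxE; case: j => [[|[|[|m]]] Hm] //=; rewrite ?addr0 ?add0r. Qed.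

Lemma e_inj : injective e.
Proof.
move=> i j /(congr1 (fun M : G => M 0 i)); rewrite !e_ent eqxx.
by case: eqP.
Qed.

Lemma eqe i j : (e i == e j) = (i == j).
Proof. by apply/eqP/eqP => [/e_inj|->]. Qed.

Lemma e0_neq i : (e0 == e i) = false.
Proof.
apply/eqP; case: i => [[|[|[|]]] //] Hi.
- by move=> /(congr1 (fun M : G => M 0 ord_max)); rewrite e0_ent e_ent.
- by move=> /(congr1 (fun M : G => M 0 ord0)); rewrite e0_ent e_ent.
- by move=> /(congr1 (fun M : G => M 0 ord0)); rewrite e0_ent e_ent.
Qed.

Lemma e_neq0 i : (e i == e0) = false.
Proof. by rewrite eq_sym e0_neq. Qed.

Definition mk a b c d : seq G :=
  nseq a (e 0) ++ nseq b (e 1) ++ nseq c (e 2) ++ nseq d e0.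
Definition inS (g : G) : bool := [|| g == e 0, g == e 1, g == e 2 | g == e0].

Definition n0 (T : seq G) := count_mem (e 0) T.
Definition n1 (T : seq G) := count_mem (e 1) T.
Definition n2 (T : seq G) := count_mem (e 2) T.
Definition n3 (T : seq G) := count_mem e0 T.

Ltac cnts := rewrite /n0 /n1 /n2 /n3 /mk !count_cat !count_nseq /= ?eqe ?e0_neq ?e_neq0 ?eqxx /=;
  rewrite ?mul0n ?mul1n ?add0n ?addn0.

Lemma ck0 a b c d : n0 (mk a b c d) = a. Proof. by cnts. Qed.
Lemma ck1 a b c d : n1 (mk a b c d) = b. Proof. by cnts. Qed.
Lemma ck2 a b c d : n2 (mk a b c d) = c. Proof. by cnts. Qed.
Lemma ck3 a b c d : n3 (mk a b c d) = d. Proof. by cnts. Qed.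

Lemma inS_mk a b c d : all inS (mk a b c d).
Proof.
by rewrite /mk !all_cat !all_nseq /inS !eqxx /= !orbT.
Qed.

Lemma cnt_out T x : all inS T -> ~~ inS x -> count_mem x T = 0%N.
Proof.
move=> /allP HT Hx; apply/count_memPn; apply/negP => /HT; exact/negP.
Qed.

Lemma perm_mk T : all inS T -> perm_eq T (mk (n0 T) (n1 T) (n2 T) (n3 T)).
Proof.
move=> HT; apply/allP => x _ /=; apply/eqP.
case: (boolP (inS x)) => Hx.
- case/or4P: Hx => /eqP ->.
  + by have := ck0 (n0 T) (n1 T) (n2 T) (n3 T).
  + by have := ck1 (n0 T) (n1 T) (n2 T) (n3 T).
  + by have := ck2 (n0 T) (n1 T) (n2 T) (n3 T).
  + by have := ck3 (n0 T) (n1 T) (n2 T) (n3 T).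
- by rewrite (@cnt_out T x) // (@cnt_out (mk _ _ _ _) x) // inS_mk.
Qed.

Lemma rowE0 (M : G) : (M == 0) = [&& M 0 0 == 0, M 0 1 == 0 & M 0 2 == 0].
Proof.
apply/eqP/and3P => [->|[/eqP h0 /eqP h1 /eqP h2]]; first by rewrite !mxE.
apply/rowP => j; rewrite mxE; case: j => [[|[|[|m]]] Hm] //.
- by rewrite -h0; congr (M 0 _); apply: val_inj.
- by rewrite -h1; congr (M 0 _); apply: val_inj.
- by rewrite -h2; congr (M 0 _); apply: val_inj.
Qed.

Lemma zs_mk a b c d :
  zero_sum (mk a b c d) = [&& (3 %| a + d)%N, (3 %| b + d)%N & (3 %| c + d)%N].
Proof.
rewrite /zero_sum /mk !big_cat !big_nseq !iter_addr_0 rowE0 !mxE !mulmxnE !e_ent e0_ent /=.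
by rewrite !mul0rn !e0_ent !add0r -!natrD !natZ3.
Qed.

Lemma pc (s1 s2 : seq G) x : perm_eq s1 s2 -> count_mem x s1 = count_mem x s2.
Proof. by move/permP. Qed.

Lemma zs_perm (s1 s2 : seq G) : perm_eq s1 s2 -> zero_sum s1 = zero_sum s2.
Proof. by move=> h; rewrite /zero_sum (perm_big _ h). Qed.

Lemma size_mk a b c d : size (mk a b c d) = (a + b + c + d)%N.
Proof. by rewrite /mk !size_cat !size_nseq !addnA. Qed.

Lemma perm_mk_eq T a b c d : all inS T ->
  n0 T = a -> n1 T = b -> n2 T = c -> n3 T = d -> perm_eq T (mk a b c d).
Proof. by move=> HT <- <- <- <-; apply: perm_mk. Qed.

Lemma mk_cat a b c d a' b' c' d' :
  perm_eq (mk a b c d ++ mk a' b' c' d') (mk (a + a') (b + b') (c + c') (d + d')).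
Proof.
apply: perm_mk_eq; first by rewrite all_cat !inS_mk.
- by rewrite /n0 count_cat -/(n0 _) -/(n0 _) !ck0.
- by rewrite /n1 count_cat -/(n1 _) -/(n1 _) !ck1.
- by rewrite /n2 count_cat -/(n2 _) -/(n2 _) !ck2.
- by rewrite /n3 count_cat -/(n3 _) -/(n3 _) !ck3.
Qed.

Definition zc a b c d := [&& (3 %| a + d)%N, (3 %| b + d)%N & (3 %| c + d)%N].

Lemma split_noatom T a1 b1 c1 d1 : all inS T ->
  (a1 <= n0 T)%N -> (b1 <= n1 T)%N -> (c1 <= n2 T)%N -> (d1 <= n3 T)%N ->
  zc a1 b1 c1 d1 ->
  zc (n0 T - a1) (n1 T - b1) (n2 T - c1) (n3 T - d1) ->
  (0 < a1 + b1 + c1 + d1)%N ->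
  (0 < (n0 T - a1) + (n1 T - b1) + (n2 T - c1) + (n3 T - d1))%N ->
  ~ atom T.
Proof.
move=> HT ha hb hc hd z1 z2 p1 p2 [_ _ H]; apply: H.
exists (mk a1 b1 c1 d1), (mk (n0 T - a1) (n1 T - b1) (n2 T - c1) (n3 T - d1)).
split.
- by rewrite -size_eq0 size_mk -lt0n.
- by rewrite -size_eq0 size_mk -lt0n.
- by rewrite zs_mk.
- by rewrite zs_mk.
have h2 := mk_cat a1 b1 c1 d1 (n0 T - a1) (n1 T - b1) (n2 T - c1) (n3 T - d1).
rewrite !subnKC // in h2.
rewrite perm_sym in h2.
have h1 := perm_mk _ HT.
exact: (perm_trans h1 h2).
Qed.

Ltac zcs := rewrite /zc; apply/and3P; split; lia.

Lemma atom_class T : all inS T -> atom T ->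
  exists y v, [/\ size T = (3 + 2 * y)%N, n1 T = (y + 3 * v)%N & (y <= 2 * n3 T)%N].
Proof.
move=> HT At.
have Hp := perm_mk T HT.
have Hs : size T = (n0 T + n1 T + n2 T + n3 T)%N by rewrite (perm_size Hp) size_mk.
case: (At) => Hne Hz _.
rewrite (zs_perm _ _ Hp) zs_mk in Hz; move/and3P: Hz => [z0 z1 z2].
have Hne' : (0 < size T)%N by rewrite lt0n size_eq0.
have Hsp := split_noatom T _ _ _ _ HT.
rewrite Hs in Hne' *.
move: Hs Hne' Hsp z0 z1 z2.
set a := n0 T; set b := n1 T; set c := n2 T; set d := n3 T.
move=> Hs Hne' Hsp z0 z1 z2.
have Ha : (3 <= a -> a + b + c + d = 3)%N.
  move=> h; have [//|/eqP hn] := eqVneq (a + b + c + d)%N 3.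
  by exfalso; apply: (Hsp 3 0 0 0) => //; try zcs; lia.
have Hb : (3 <= b -> a + b + c + d = 3)%N.
  move=> h; have [//|/eqP hn] := eqVneq (a + b + c + d)%N 3.
  by exfalso; apply: (Hsp 0 3 0 0) => //; try zcs; lia.
have Hc : (3 <= c -> a + b + c + d = 3)%N.
  move=> h; have [//|/eqP hn] := eqVneq (a + b + c + d)%N 3.
  by exfalso; apply: (Hsp 0 0 3 0) => //; try zcs; lia.
have Hd : (3 <= d -> a + b + c + d = 3)%N.
  move=> h; have [//|/eqP hn] := eqVneq (a + b + c + d)%N 3.
  by exfalso; apply: (Hsp 0 0 0 3) => //; try zcs; lia.
case: (leqP 3 a) => [h'|ha]; first by have h := Ha h'; exists 0%N, 0%N; split; lia.
case: (leqP 3 b) => [h'|hb]; first by have h := Hb h'; exists 0%N, 1%N; split; lia.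
case: (leqP 3 c) => [h'|hc]; first by have h := Hc h'; exists 0%N, 0%N; split; lia.
case: (leqP 3 d) => [h'|hd]; first by have h := Hd h'; exists 0%N, 0%N; split; lia.
have : (d = 1 \/ d = 2)%N by lia.
case=> hd'.
- by exists 2%N, 0%N; split; lia.
- by exists 1%N, 0%N; split; lia.
Qed.

Lemma atom_mk a b c d : zc a b c d -> (0 < a + b + c + d)%N ->
  (forall a1 b1 c1 d1, (a1 <= a)%N -> (b1 <= b)%N -> (c1 <= c)%N -> (d1 <= d)%N ->
     zc a1 b1 c1 d1 -> (0 < a1 + b1 + c1 + d1)%N ->
     (a1 + b1 + c1 + d1 < a + b + c + d)%N -> False) ->
  atom (mk a b c d).
Proof.
move=> z p H; split.
- by rewrite -size_eq0 size_mk -lt0n.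
- by rewrite zs_mk.
move=> [T1 [T2 [ne1 ne2 zs1 zs2 hp]]].
have hS : all inS (T1 ++ T2) by rewrite -(perm_all _ hp) inS_mk.
rewrite all_cat in hS; case/andP: hS => h1 h2.
have ea : a = (n0 T1 + n0 T2)%N by rewrite -{1}(ck0 a b c d) /n0 (pc _ _ _ hp) count_cat.
have eb : b = (n1 T1 + n1 T2)%N by rewrite -{1}(ck1 a b c d) /n1 (pc _ _ _ hp) count_cat.
have ec : c = (n2 T1 + n2 T2)%N by rewrite -{1}(ck2 a b c d) /n2 (pc _ _ _ hp) count_cat.
have ed : d = (n3 T1 + n3 T2)%N by rewrite -{1}(ck3 a b c d) /n3 (pc _ _ _ hp) count_cat.
have s1 : size T1 = (n0 T1 + n1 T1 + n2 T1 + n3 T1)%N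
  by rewrite (perm_size (perm_mk _ h1)) size_mk.
have s2 : size T2 = (n0 T2 + n1 T2 + n2 T2 + n3 T2)%N
  by rewrite (perm_size (perm_mk _ h2)) size_mk.
have p1 : (0 < size T1)%N by rewrite lt0n size_eq0.
have p2 : (0 < size T2)%N by rewrite lt0n size_eq0.
apply: (H (n0 T1) (n1 T1) (n2 T1) (n3 T1)); try lia.
by rewrite /zc -zs_mk -(zs_perm _ _ (perm_mk _ h1)).
Qed.

Ltac atomtac := apply: atom_mk => //;
  move=> a1 b1 c1 d1 ha hb hc hd /and3P[z1 z2 z3] p1 p2; lia.

Lemma atU : atom (mk 2 2 2 1). Proof. atomtac. Qed.
Lemma atX : atom (mk 1 1 1 2). Proof. atomtac. Qed.
Lemma atW : atom (mk 0 0 0 3). Proof. atomtac. Qed.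
Lemma atV0 : atom (mk 3 0 0 0). Proof. atomtac. Qed.
Lemma atV1 : atom (mk 0 3 0 0). Proof. atomtac. Qed.
Lemma atV2 : atom (mk 0 0 3 0). Proof. atomtac. Qed.

Lemma sum_class (As : seq (seq G)) : (forall A, A \in As -> atom A) ->
  all inS (flatten As) ->
  exists Y V, [/\ size (flatten As) = (3 * size As + 2 * Y)%N,
     n1 (flatten As) = (Y + 3 * V)%N & (Y <= 2 * n3 (flatten As))%N].
Proof.
elim: As => [|A As IH] HA /=; first by move=> _; exists 0%N, 0%N.
rewrite all_cat => /andP[hA hAs].
have [y [v [e1 e2 e3]]] := atom_class A hA (HA A (mem_head _ _)).
have [Y [V [f1 f2 f3]]] : exists Y V, [/\ size (flatten As) = (3 * size As + 2 * Y)%N, n1 (flatten As) = (Y + 3 * V)%N & (Y <= 2 * n3 (flatten As))%N].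
  by apply: IH => // B hB; apply: HA; rewrite in_cons hB orbT.
exists (y + Y)%N, (v + V)%N.
rewrite size_cat /n1 /n3 !count_cat -/(n1 _) -/(n1 _) -/(n3 _) -/(n3 _).
split; lia.
Qed.

Lemma mk_eqP a b c d a' b' c' d' : a = a' -> b = b' -> c = c' -> d = d' ->
  perm_eq (mk a b c d) (mk a' b' c' d').
Proof. by move=> -> -> -> ->. Qed.

Lemma pcat_mk (s1 s2 : seq G) a b c d a' b' c' d' :
  perm_eq s1 (mk a b c d) -> perm_eq s2 (mk a' b' c' d') ->
  perm_eq (s1 ++ s2) (mk (a + a') (b + b') (c + c') (d + d')).
Proof.
move=> h1 h2; have h3 := perm_cat h1 h2.
exact: (perm_trans h3 (mk_cat _ _ _ _ _ _ _ _)).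
Qed.

Lemma U_perm : perm_eq U (mk 2 2 2 1).
Proof.
apply: perm_mk_eq; first by rewrite /U /= /inS !eqxx /= !orbT.
all: by rewrite /n0 /n1 /n2 /n3 /U /= ?eqe ?e0_neq ?e_neq0 ?eqxx.
Qed.

Lemma fn_mk n a b c d : perm_eq (flatten (nseq n (mk a b c d)))
  (mk (n * a) (n * b) (n * c) (n * d)).
Proof.
elim: n => [|n IH]; first by [].
have h := pcat_mk _ _ _ _ _ _ _ _ _ _ (perm_refl (mk a b c d)) IH.
apply: (perm_trans h); apply: mk_eqP; lia.
Qed.

Lemma Upow_perm n : perm_eq (Upow n) (mk (2 * n) (2 * n) (2 * n) n).
Proof.
rewrite /Upow.
elim: n => [|n IH]; first by [].
have h2 := pcat_mk _ _ _ _ _ _ _ _ _ _ U_perm IH.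
apply: (perm_trans h2); apply: mk_eqP; lia.
Qed.

Lemma constr k u x w v : (u + 2 * x + 3 * w = 3 * k)%N -> (2 * u + x + 3 * v = 6 * k)%N ->
  in_L (Upow (3 * k)) (u + x + w + 3 * v)%N.
Proof.
move=> h1 h2.
exists (nseq u (mk 2 2 2 1) ++ nseq x (mk 1 1 1 2) ++ nseq w (mk 0 0 0 3) ++
        nseq v (mk 3 0 0 0) ++ nseq v (mk 0 3 0 0) ++ nseq v (mk 0 0 3 0)).
split.
- rewrite !size_cat !size_nseq; lia.
- move=> A; rewrite !mem_cat !mem_nseq.
  by case/or4P => [/andP[_ /eqP->]|/andP[_ /eqP->]|/andP[_ /eqP->]|/or3P[/andP[_ /eqP->]|/andP[_ /eqP->]|/andP[_ /eqP->]]];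
    [exact: atU|exact: atX|exact: atW|exact: atV0|exact: atV1|exact: atV2].
rewrite !flatten_cat.
have h := pcat_mk _ _ _ _ _ _ _ _ _ _ (fn_mk u 2 2 2 1)
  (pcat_mk _ _ _ _ _ _ _ _ _ _ (fn_mk x 1 1 1 2)
  (pcat_mk _ _ _ _ _ _ _ _ _ _ (fn_mk w 0 0 0 3)
  (pcat_mk _ _ _ _ _ _ _ _ _ _ (fn_mk v 3 0 0 0)
  (pcat_mk _ _ _ _ _ _ _ _ _ _ (fn_mk v 0 3 0 0) (fn_mk v 0 0 3 0))))).
apply: (perm_trans h); rewrite perm_sym.
apply: (perm_trans (Upow_perm _)); apply: mk_eqP; lia.
Qed.

Lemma part1 k l :
  in_L (Upow (3 * k)) l <-> exists2 j : nat, (j <= 2 * k)%N & l = (3 * k + 2 * j)%N.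
Proof.
split.
- move=> [As [hs hA hp]].
  have hS : all inS (flatten As).
    by rewrite (perm_all _ hp) (perm_all _ (Upow_perm _)) inS_mk.
  have [Y [V [f1 f2 f3]]] := sum_class As hA hS.
  have g1 := perm_size hp; rewrite (perm_size (Upow_perm _)) size_mk in g1.
  have g2 : n1 (flatten As) = (2 * (3 * k))%N.
    by rewrite /n1 (pc _ _ _ hp) (pc _ _ _ (Upow_perm _)) -/(n1 _) ck1.
  have g3 : n3 (flatten As) = (3 * k)%N.
    by rewrite /n3 (pc _ _ _ hp) (pc _ _ _ (Upow_perm _)) -/(n3 _) ck3.
  rewrite g1 in f1; rewrite g2 in f2; rewrite g3 in f3; exists V; lia.
- move=> [j hj ->].
  case: (leqP k j) => hkj.
  + have := constr k (2 * k - j) (2 * k - j) (j - k) j.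
    have -> : (2 * k - j + (2 * k - j) + (j - k) + 3 * j = 3 * k + 2 * j)%N by lia.
    apply; lia.
  + have := constr k (3 * k - 2 * j) j 0 j.
    have -> : (3 * k - 2 * j + j + 0 + 3 * j = 3 * k + 2 * j)%N by lia.
    apply; lia.
Qed.

Theorem lemma5p4 (k : nat) (hk : (0 < k)%N) :
  (forall l : nat,
     in_L (Upow (3 * k)) l <->
     exists2 j : nat, (j <= 2 * k)%N & l = (3 * k + 2 * j)%N)
  /\
  (exists M m : nat,
     [/\ in_L (Upow (3 * k)) M /\ (forall l, in_L (Upow (3 * k)) l -> l <= M)%N,
         in_L (Upow (3 * k)) m /\ (forall l, in_L (Upow (3 * k)) l -> m <= l)%N,
         (0 < m)%N & (3 * M = 7 * m)%N]).
Proof.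
split; first exact: part1.
exists (7 * k)%N, (3 * k)%N; split.
- split; first by apply/part1; exists (2 * k)%N => //; lia.
  by move=> l /part1 [j hj ->]; lia.
- split; first by apply/part1; exists 0%N => //; lia.
  by move=> l /part1 [j hj ->]; lia.
- lia.
- lia.
Qed.
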